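(* Let $r\ge 1$ and consider the polynomial algebra $\mathbb{C}[a_u: u\in\mathbb{F}_2^r\setminus\{\mathbf{0}\}]$. Then $$\operatorname{span}_{\mathbb{Z}}\Big\{\sum_{u:\,u\cdot v=1}a_u\ \Big|\ v\in\mathbb{F}_2^r\Big\}=\operatorname{span}_{\mathbb{Z}}\Big\{2^{|S|-1}\sum_{u:\,u_S=d}a_u\ \Big|\ \emptyset\neq S\subseteq[r],\ d\in\mathbb{F}_2^{|S|}\setminus\{\mathbf{0}\}\Big\}.$$
   Context: $[r]=\{1,\dots,r\}$. All sums range over $u\in\mathbb{F}_2^r\setminus\{\mathbf{0}\}$ (the conditions force $u\neq\mathbf{0}$). For $S\subseteq[r]$ and $d\in\mathbb{F}_2^{|S|}$, $u_S=d$ means that the coordinates of $u$ indexed by $S$, listed in increasing order of index, equal the entries of $d$. *)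

(* Defs.v *)
From HB Require Import structures.
From mathcomp Require Import all_boot all_order all_algebra all_field.
From mathcomp Require Import mpoly.
Set Implicit Arguments. Unset Strict Implicit. Unset Printing Implicit Defensive.
Import Order.TTheory GRing.Theory Num.Theory.
Local Open Scope ring_scope.

Definition NZ (r : nat) := {u : 'rV['F_2]_r | u != 0}.

Definition polyAlg (r : nat) := {mpoly algC[#|{: NZ r}|]}.

Definition avar (r : nat) (u : NZ r) : polyAlg r := 'X_(enum_rank u).

Definition dotF2 (r : nat) (u v : 'rV['F_2]_r) : 'F_2 := \sum_(i < r) u 0 i * v 0 i.

(* u_S = d : the coordinates of u indexed by S, in increasing order of index
   (enum S lists S increasingly), equal the entries of d. *)
Definition restr_eq (r : nat) (u : 'rV['F_2]_r) (S : {set 'I_r}) (d : 'rV['F_2]_#|S|) :=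
  [forall i : 'I_#|S|, u 0 (enum_val i) == d 0 i].

Definition Zspan (M : zmodType) (G : M -> Prop) (p : M) : Prop :=
  exists s : seq (int * M),
    (forall i, (i < size s)%N -> G (nth (0%R, 0) s i).2) /\ p = \sum_(x <- s) x.2 *~ x.1.

Definition genL (r : nat) (p : polyAlg r) : Prop :=
  exists v : 'rV['F_2]_r, p = \sum_(u : NZ r | dotF2 (val u) v == 1) avar u.

Definition genR (r : nat) (p : polyAlg r) : Prop :=
  exists (S : {set 'I_r}) (d : 'rV['F_2]_#|S|),
    S != set0 /\ d != 0 /\
    p = (\sum_(u : NZ r | @restr_eq r (val u) S d) avar u) *+ (2 ^ (#|S|.-1))%N.

(* Main.v *)
Require Import Defs.
From HB Require Import structures.
From mathcomp Require Import all_boot all_order all_algebra all_field.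
From mathcomp Require Import mpoly.
Set Implicit Arguments. Unset Strict Implicit. Unset Printing Implicit Defensive.
Import Order.TTheory GRing.Theory Num.Theory.
Local Open Scope ring_scope.

Section Z.
Variables (M : zmodType) (G : M -> Prop).
Lemma Zspan0 : Zspan G 0.
Proof. by exists [::]; split => //; rewrite big_nil. Qed.
Lemma ZspanD p q : Zspan G p -> Zspan G q -> Zspan G (p + q).
Proof.
case=> s [Hs ->] [t [Ht ->]]; exists (s ++ t); split; last by rewrite big_cat.
move=> i; rewrite size_cat nth_cat; case: ifP => Hi; first by move=> _; apply: Hs.
by move=> H; apply: Ht; rewrite ltn_subLR // leqNgt Hi.
Qed.
Lemma ZspanZ p n : Zspan G p -> Zspan G (p *~ n).
Proof.
case=> s [Hs ->]; exists (map (fun x => (x.1 * n, x.2)) s); split.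
  by move=> i; rewrite size_map => Hi; rewrite (nth_map (0, 0)) //=; apply: Hs.
by rewrite big_map mulrz_suml; apply: eq_bigr => x _ /=; rewrite mulrzA.
Qed.
Lemma Zspan_gen g n : G g -> Zspan G (g *~ n).
Proof. by move=> Hg; exists [:: (n, g)]; split; [case | rewrite big_seq1]. Qed.
Lemma Zspan_sum (I : finType) (P : pred I) (n : I -> int) (g : I -> M) :
  (forall i, P i -> G (g i)) -> Zspan G (\sum_(i | P i) g i *~ n i).
Proof.
move=> H; apply: (big_ind (Zspan G)); [exact: Zspan0|exact: ZspanD|].
by move=> i Pi; apply: Zspan_gen; apply: H.
Qed.
End Z.

Lemma Zspan_trans (M : zmodType) (G1 G2 : M -> Prop) p :
  (forall g, G1 g -> Zspan G2 g) -> Zspan G1 p -> Zspan G2 p.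
Proof.
move=> H [s [Hs ->]]; elim: s Hs => [|[n g] s IH] Hs; first by rewrite big_nil; apply: Zspan0.
rewrite big_cons; apply: ZspanD; first by apply: ZspanZ; apply: H; apply: (Hs 0%N).
by apply: IH => i Hi; apply: (Hs i.+1).
Qed.
Definition cs r (c : NZ r -> int) : polyAlg r := \sum_u avar u *~ c u.
Lemma cs_eq r (c c' : NZ r -> int) : (forall u, c u = c' u) -> cs c = cs c'.
Proof. by move=> H; apply: eq_bigr => u _; rewrite H. Qed.
Lemma cs_sum r (P : pred (NZ r)) (k : nat) :
  (\sum_(u | P u) avar u) *+ k = cs (fun u => (P u)%:R * k%:R).
Proof.
rewrite /cs -sumrMnl big_mkcond; apply: eq_bigr => u _.
by rewrite -natrM mulrz_nat; case: (P u); rewrite ?mul1n ?mul0n ?mulr0n.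
Qed.
Lemma cs_sum1 r (P : pred (NZ r)) :
  (\sum_(u | P u) avar u) = cs (fun u => (P u)%:R * 1%:R).
Proof. by rewrite -cs_sum mulr1n. Qed.
Lemma combine r (I : finType) (P : pred I) (n : I -> int) (c : I -> NZ r -> int) :
  \sum_(i | P i) cs (c i) *~ n i = cs (fun u => \sum_(i | P i) n i * c i u).
Proof.
rewrite /cs; under eq_bigr do rewrite mulrz_suml.
rewrite exchange_big; apply: eq_bigr => u _; rewrite mulrz_sumr.
by apply: eq_bigr => i _; rewrite -mulrzA mulrC.
Qed.

Lemma prod_ind (I : finType) (J : pred I) (b : I -> bool) :
  \prod_(i in J) ((b i)%:R : int) = [forall i in J, b i]%:R.
Proof.
case: (boolP [forall i in J, b i]) => H.
  rewrite big1 ?mulr1n // => i Hi; by rewrite (forall_inP H i Hi) mulr1n.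
by move/forall_inPn: H => [i Hi Hb]; rewrite (bigD1 i) //= (negbTE Hb) mul0r.
Qed.

Lemma sumP m (f : 'I_m -> int) :
  \sum_(K : {set 'I_m}) \prod_(k in K) f k = \prod_k (f k + 1).
Proof.
rewrite (bigA_distr (1 : int) +%R f (fun _ => 1)); apply: eq_bigr => K _.
by rewrite big_mkcond.
Qed.
From mathcomp Require Import ring.
Definition e (x : 'F_2) : int := if x == 0 then 1 else -1.
Lemma eD (x y : 'F_2) : e (x + y) = e x * e y.
Proof. by case: x => [[|[|?]] ?]; case: y => [[|[|?]] ?]. Qed.
Lemma e2 (x : 'F_2) : 2 * (x == 1)%:R = 1 - e x.
Proof. by case: x => [[|[|?]] ?]. Qed.
Lemma e3 (a b : 'F_2) : e a * e b + 1 = 2 * (b == a)%:R.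
Proof. by case: a => [[|[|?]] ?]; case: b => [[|[|?]] ?]. Qed.
Lemma e4 (x : 'F_2) : e x = -2 * (x != 0)%:R + 1.
Proof. by case: x => [[|[|?]] ?]. Qed.
Lemma e5 (x : 'F_2) : (x != 0) = (x == 1).
Proof. by case: x => [[|[|?]] ?]. Qed.
Lemma e7 (x : 'F_2) : x != 0 -> e x + 1 = 0.
Proof. by case: x => [[|[|?]] ?]. Qed.

Lemma e_sum (I : finType) (f : I -> 'F_2) (P : pred I) :
  e (\sum_(i | P i) f i) = \prod_(i | P i) e (f i).
Proof. exact: (big_morph e eD). Qed.

Lemma restr1 r (w : 'rV['F_2]_r) (J : {set 'I_r}) :
  @restr_eq r w J (const_mx 1) = [forall i in J, w 0 i != 0].
Proof.
apply/forallP/forall_inP => [H i Hi|H k].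
  by have := H (enum_rank_in Hi i); rewrite enum_rankK_in // mxE => /eqP ->.
by rewrite mxE -e5; apply: H; exact: enum_valP.
Qed.

Lemma ptA r (w v : 'rV['F_2]_r) :
 ((dotF2 w v == 1)%:R * 1%:R : int) =
 \sum_(J : {set 'I_r} | J != set0)
   ((-1)^+(#|J|.+1) * [forall i in J, v 0 i != 0]%:R) *
   ((@restr_eq r w J (const_mx 1))%:R * (2^(#|J|.-1))%:R).
Proof.
apply: (@mulfI _ 2) => //.
rewrite mulr1 e2 /dotF2 e_sum.
under eq_bigr do rewrite e4.
rewrite -sumP (bigD1 set0) //= big_set0 opprD addrA subrr add0r mulr_sumr -sumrN.
apply: eq_bigr => J HJ.
rewrite big_split /= prodr_const prod_ind restr1.
have -> : [forall i in J, w 0 i * v 0 i != 0] =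
   [forall i in J, v 0 i != 0] && [forall i in J, w 0 i != 0].
  apply/forall_inP/andP => [H|[/forall_inP H1 /forall_inP H2] i Hi].
    by split; apply/forall_inP => i Hi; have := H i Hi; rewrite mulf_eq0 negb_or => /andP[].
  by rewrite mulf_neq0 ?H1 ?H2.
rewrite -mulnb natrM natrX.
have : (0 < #|J|)%N by rewrite card_gt0.
case: #|J| => [//|k _] /=.
rewrite -mulN1r exprMn !exprS.
ring.
Qed.

Lemma prod_ind_all (I : finType) (b : I -> bool) :
  \prod_i ((b i)%:R : int) = [forall i, b i]%:R.
Proof.
case: (boolP [forall i, b i]) => H.
  rewrite big1 ?mulr1n // => i _; by rewrite (forallP H i) mulr1n.
by move/forallPn: H => [i Hb]; rewrite (bigD1 i) //= (negbTE Hb) mul0r.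
Qed.

Definition vK r (S : {set 'I_r}) (K : {set 'I_#|S|}) : 'rV['F_2]_r :=
  \row_(i < r) ((i \in [set enum_val k | k in K]) %:R : 'F_2).

Lemma dotK r (S : {set 'I_r}) (w : 'rV['F_2]_r) (K : {set 'I_#|S|}) :
  dotF2 w (vK K) = \sum_(k in K) w 0 (enum_val k).
Proof.
rewrite /dotF2; under eq_bigr do rewrite mxE.
rewrite (bigID (mem [set enum_val k | k in K])) /= [X in _ + X]big1 => [|i /negbTE ->]; last by rewrite mulr0.
rewrite addr0 (big_imset _ (in2W enum_val_inj)) /=.
by apply: eq_bigr => k Hk; rewrite imset_f // mulr1.
Qed.

Lemma ptB r (S : {set 'I_r}) (d : 'rV['F_2]_#|S|) (w : 'rV['F_2]_r) :
  S != set0 -> d != 0 ->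
  ((@restr_eq r w S d)%:R * (2^(#|S|.-1))%:R : int) =
  \sum_(K : {set 'I_#|S|}) (- \prod_(k in K) e (d 0 k)) * ((dotF2 w (vK K) == 1)%:R * 1%:R).
Proof.
move=> HS Hd.
apply: (@mulfI _ 2) => //.
rewrite mulr_sumr.
under eq_bigr => K _ do rewrite mulr1 mulrCA e2 dotK e_sum mulrBr mulr1 mulNr opprK -big_split /=.
rewrite big_split /= sumrN !sumP.
have [k Hk] : exists k, d 0 k != 0.
  case: (pickP (fun k => d 0 k != 0)) => [k Hk|H]; first by exists k.
  by move/eqP: Hd; case; apply/rowP => k; rewrite !mxE; have := H k => /negbFE/eqP.
rewrite (bigD1 k) //= e7 // mul0r oppr0 add0r.
under eq_bigr do rewrite e3.
rewrite big_split /= prodr_const card_ord prod_ind_all.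
have HS' : (0 < #|S|)%N by rewrite card_gt0.
have H2 : forall (x : int) n, (0 < n)%N -> 2 * (x * (2^n.-1)%:R) = 2^+n * x.
  by move=> x [//|n] _ /=; rewrite natrX exprS; ring.
by rewrite H2 // mulrC.
Qed.

Theorem mainTheorem9 (r : nat) (hr : (1 <= r)%N) :
  forall p : polyAlg r, Zspan (@genL r) p <-> Zspan (@genR r) p.
Proof.
move=> p; split; apply: Zspan_trans => g.
  case=> v ->.
  have -> : \sum_(u : NZ r | dotF2 (val u) v == 1) avar u =
    \sum_(J : {set 'I_r} | J != set0)
      ((\sum_(u : NZ r | @restr_eq r (val u) J (const_mx 1)) avar u) *+ (2 ^ (#|J|.-1))%N)
        *~ ((-1)^+(#|J|.+1) * [forall i in J, v 0 i != 0]%:R).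
    rewrite cs_sum1; under eq_bigr do rewrite cs_sum.
    by rewrite combine; apply: cs_eq => u; exact: ptA.
  apply: Zspan_sum => J HJ; exists J, (const_mx 1); split => //; split => //.
  have : (0 < #|J|)%N by rewrite card_gt0.
  case: #|J| => [//|k] _; apply/eqP => /rowP /(_ ord0); rewrite !mxE.
  by [].
case=> S [d [HS [Hd ->]]].
have -> : (\sum_(u : NZ r | @restr_eq r (val u) S d) avar u) *+ (2 ^ (#|S|.-1))%N =
  \sum_(K : {set 'I_#|S|}) (\sum_(u : NZ r | dotF2 (val u) (vK K) == 1) avar u)
     *~ (- \prod_(k in K) e (d 0 k)).
  rewrite cs_sum; under eq_bigr do rewrite cs_sum1.
  by rewrite combine; apply: cs_eq => u; exact: ptB.
by apply: Zspan_sum => K _; exists (vK K).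
Qed.
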